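(* Let $G$ be a group with subgroups $H,J$ such that $H\ne G$, $|J:H\cap J|=2$ and $|H:H\cap J|$ finite; let $g\in J\setminus(H\cap J)$, $K=H\cap H^g$, $\lambda=|K:H\cap J|$, $L=\langle K,g\rangle$, $\Gamma=\mathrm{Cos}(G,H,J)$ and $\Sigma=\mathrm{Cos}(G,H,L)$. Suppose $b$ is an odd integer and $J'$ is a subgroup with $\langle g^b\rangle\le J'\le J$ and $\mu=|J:J'|$ finite. Then $|J':H\cap J'|=2$, $|H:H\cap J'|$ is finite, $\Gamma'=\mathrm{Cos}(G,H,J')$ is $G$-arc-transitive, $\Gamma'$ is a $(G,\mu)$-extender of $\Gamma$, and $\Gamma'$ is a $(G,\lambda\mu)$-extender of $\Sigma$.
   Context: $\mathrm{Cos}(G,H,J)$ (for $H\ne G$, $|J:H\cap J|=2$, $|H:H\cap J|<\infty$) is the graph with vertex set $\{Hx:x\in G\}$, edge set $\{Jy:y\in G\}$, $Hx$ incident with $Jy$ iff $yx^{-1}\in JH$, with $G$ acting by right multiplication; multiple edges are allowed. The $\mu$-extender $\Gamma^{(\mu)}$ of a graph replaces every edge by $\mu$ edges with the same end vertices; $\Gamma'$ is a $(G,\mu)$-extender of $\Gamma$ if $\Gamma'\cong\Gamma^{(\mu)}$ and both are $G$-arc-transitive. *)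

(* Defs.v *)
From Stdlib Require Import ZArith.

Set Implicit Arguments.

Record group := Group {
  gcar :> Type;
  gmul : gcar -> gcar -> gcar;
  gone : gcar;
  ginv : gcar -> gcar;
  gmulA : forall x y z, gmul x (gmul y z) = gmul (gmul x y) z;
  gmul1 : forall x, gmul gone x = x;
  gmulV : forall x, gmul (ginv x) x = gone
}.

Arguments gmul {g}.
Arguments gone {g}.
Arguments ginv {g}.

Section Defs.
Variable G : group.

Definition is_subgroup (S : G -> Prop) : Prop :=
  S gone /\ (forall x y, S x -> S y -> S (gmul x y)) /\ (forall x, S x -> S (ginv x)).

Definition setI (A B : G -> Prop) : G -> Prop := fun x => A x /\ B x.
Definition subset (A B : G -> Prop) : Prop := forall x, A x -> B x.

Definition gen (A : G -> Prop) : G -> Prop :=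
  fun x => forall S, is_subgroup S -> subset A S -> S x.

(** H^g = g^-1 H g *)
Definition conjset (H : G -> Prop) (g : G) : G -> Prop :=
  fun x => H (gmul (gmul g x) (ginv g)).

Fixpoint npow (x : G) (n : nat) : G :=
  match n with O => gone | S n => gmul x (npow x n) end.

Definition zpow (x : G) (b : Z) : G :=
  if (0 <=? b)%Z then npow x (Z.abs_nat b) else npow (ginv x) (Z.abs_nat b).

(** |A : B| = n (B a subgroup contained in A): there are exactly n right
    cosets B x with x in A. *)
Definition index_eq (A B : G -> Prop) (n : nat) : Prop :=
  exists f : {i : nat | i < n} -> G,
    (forall i, A (f i)) /\
    (forall i j, B (gmul (f i) (ginv (f j))) -> i = j) /\
    (forall x, A x -> exists i, B (gmul x (ginv (f i)))).

Definition rcoset (H : G -> Prop) (x : G) : G -> Prop :=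
  fun z => exists h, H h /\ z = gmul h x.

Definition cosets (H : G -> Prop) := {S : G -> Prop | exists x, S = rcoset H x}.

Definition prodset (J H : G -> Prop) : G -> Prop :=
  fun z => exists j h, J j /\ H h /\ z = gmul j h.

Definition actset (S : G -> Prop) (a : G) : G -> Prop :=
  fun z => S (gmul z (ginv a)).
End Defs.

Arguments is_subgroup {G}.
Arguments setI {G}.
Arguments subset {G}.
Arguments gen {G}.
Arguments conjset {G}.
Arguments npow {G}.
Arguments zpow {G}.
Arguments index_eq {G}.
Arguments rcoset {G}.
Arguments cosets {G}.
Arguments prodset {G}.
Arguments actset {G}.

Record mgraph := MGraph { mV : Type; mE : Type; minc : mV -> mE -> Prop }.

Definition bijective {A B : Type} (f : A -> B) : Prop :=
  exists g : B -> A, (forall a, g (f a) = a) /\ (forall b, f (g b) = b).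

Definition mg_iso (X Y : mgraph) : Prop :=
  exists (fV : mV X -> mV Y) (fE : mE X -> mE Y),
    bijective fV /\ bijective fE /\
    forall v e, minc X v e <-> minc Y (fV v) (fE e).

(** mu-extender: every edge replaced by mu parallel edges. *)
Definition mg_extend (X : mgraph) (mu : nat) : mgraph :=
  MGraph (fun (v : mV X) (e : mE X * {i : nat | i < mu}) => minc X v (fst e)).

Definition Cos {G : group} (H J : G -> Prop) : mgraph :=
  MGraph (fun (v : cosets H) (e : cosets J) =>
    exists x y, proj1_sig v = rcoset H x /\ proj1_sig e = rcoset J y /\
                prodset J H (gmul y (ginv x))).

(** G acts (by right multiplication) transitively on the arcs (incident
    vertex-edge pairs) of Cos(G,H,J). *)
Definition cos_arc_transitive {G : group} (H J : G -> Prop) : Prop :=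
  forall (v v' : cosets H) (e e' : cosets J),
    minc (Cos H J) v e -> minc (Cos H J) v' e' ->
    exists a : G, proj1_sig v' = actset (proj1_sig v) a /\
                  proj1_sig e' = actset (proj1_sig e) a.

Definition cos_extender {G : group} (H J' J : G -> Prop) (mu : nat) : Prop :=
  mg_iso (Cos H J') (mg_extend (Cos H J) mu) /\
  cos_arc_transitive H J' /\ cos_arc_transitive H J.

(* Main.v *)
Require Import Defs.
From Stdlib Require Import ZArith.
From Stdlib Require Import Arith Lia FunctionalExtensionality PropExtensionality ProofIrrelevance ClassicalEpsilon Classical.

Arguments gmulA {g}.
Arguments gmul1 {g}.
Arguments gmulV {g}.

Section GroupFacts.
Variable G : group.
Local Notation "x ** y" := (@gmul G x y) (at level 40, left associativity).
Local Notation "x ^-1" := (@ginv G x) (at level 2).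
Local Notation "1" := (@gone G).

Lemma g_mulrV (x : G) : x ** x^-1 = 1.
Proof.
  assert (Hy : (x ** x^-1) ** (x ** x^-1) = x ** x^-1).
  { rewrite <- (@gmulA G). rewrite (gmulA x^-1 x). rewrite gmulV, gmul1. reflexivity. }
  set (y := x ** x^-1) in *.
  assert (E : y^-1 ** (y ** y) = y) by (rewrite gmulA, gmulV, gmul1; reflexivity).
  rewrite Hy, gmulV in E. symmetry; exact E.
Qed.

Lemma g_mulr1 (x : G) : x ** 1 = x.
Proof. rewrite <- (gmulV x), gmulA, g_mulrV, gmul1. reflexivity. Qed.

Lemma g_mulKV (x y : G) : x^-1 ** (x ** y) = y.
Proof. rewrite gmulA, gmulV, gmul1. reflexivity. Qed.

Lemma g_mulVK (x y : G) : x ** (x^-1 ** y) = y.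
Proof. rewrite gmulA, g_mulrV, gmul1. reflexivity. Qed.

Lemma g_inv_uniq (x y : G) : x ** y = 1 -> y = x^-1.
Proof. intro E. rewrite <- (g_mulKV x y), E, g_mulr1. reflexivity. Qed.

Lemma g_invK (x : G) : (x^-1)^-1 = x.
Proof. symmetry. apply g_inv_uniq. apply gmulV. Qed.

Lemma g_invM (x y : G) : (x ** y)^-1 = y^-1 ** x^-1.
Proof. symmetry. apply g_inv_uniq. rewrite <- (@gmulA G), (@gmulA G y), g_mulrV, gmul1, g_mulrV. reflexivity. Qed.

Lemma g_inv1 : (1 : G)^-1 = 1.
Proof. symmetry; apply g_inv_uniq. apply gmul1. Qed.

End GroupFacts.
Arguments g_mulrV {G}. Arguments g_mulr1 {G}. Arguments g_mulKV {G}. Arguments g_mulVK {G}. Arguments g_inv_uniq {G}. Arguments g_invK {G}. Arguments g_invM {G}. Arguments g_inv1 {G}.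

#[global] Hint Rewrite @g_invM @g_invK @g_inv1 : gdb.
#[global] Hint Rewrite <- @gmulA : gdb.
#[global] Hint Rewrite @gmul1 @g_mulr1 @gmulV @g_mulrV @g_mulKV @g_mulVK : gdb.

Ltac gsimpl := autorewrite with gdb.
Ltac geq := gsimpl; reflexivity.

Section Main.
Variable G : group.
Local Notation "x ** y" := (@gmul G x y) (at level 40, left associativity).
Local Notation "x ^-1" := (@ginv G x) (at level 2).


Lemma sub1 S : is_subgroup S -> S (@gone G).
Proof. intros [h _]; exact h. Qed.
Lemma subM S : is_subgroup S -> forall x y : G, S x -> S y -> S (x ** y).
Proof. intros [_ [h _]]; exact h. Qed.
Lemma subV S : is_subgroup S -> forall x : G, S x -> S (x^-1).
Proof. intros [_ [_ h]]; exact h. Qed.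
Lemma subVr S : is_subgroup S -> forall x : G, S (x^-1) -> S x.
Proof. intros HS x h. rewrite <- (g_invK x). apply subV; auto. Qed.

Lemma rcoset_mem S (x z : G) : is_subgroup S -> (rcoset S x z <-> S (z ** x^-1)).
Proof.
  intro HS. split.
  - intros [h [Hh ->]]. replace (h ** x ** x^-1) with h by geq. exact Hh.
  - intro Hz. exists (z ** x^-1). split; [exact Hz| geq].
Qed.

Lemma rcoset_eq S (x y : G) : is_subgroup S -> S (x ** y^-1) -> rcoset S x = rcoset S y.
Proof.
  intros HS Hxy. apply functional_extensionality; intro z. apply propositional_extensionality.
  rewrite !rcoset_mem by auto. split; intro Hz.
  - replace (z ** y^-1) with ((z ** x^-1) ** (x ** y^-1)) by geq. apply subM; auto.
  - replace (z ** x^-1) with ((z ** y^-1) ** (x ** y^-1)^-1) by geq. apply subM; auto. apply subV; auto.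
Qed.

Lemma rcoset_eq_inv S (x y : G) : is_subgroup S -> rcoset S x = rcoset S y -> S (x ** y^-1).
Proof.
  intros HS E. apply (rcoset_mem S y x HS). rewrite <- E. apply rcoset_mem; auto.
  gsimpl. apply sub1; auto.
Qed.

Lemma cosets_eq (S : G -> Prop) (c d : cosets S) : proj1_sig c = proj1_sig d -> c = d.
Proof. destruct c as [c pc], d as [d pd]; simpl; intro E; subst. f_equal. apply proof_irrelevance. Qed.

Definition rep {S : G -> Prop} (c : cosets S) : G := proj1_sig (constructive_indefinite_description _ (proj2_sig c)).
Lemma rep_spec (S : G -> Prop) (c : cosets S) : proj1_sig c = rcoset S (rep c).
Proof. unfold rep. destruct (constructive_indefinite_description _ _) as [x Hx]. exact Hx. Qed.

Arguments rep_spec {S} c.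
Definition mkc (S : G -> Prop) (x : G) : cosets S := exist _ (rcoset S x) (ex_intro _ x eq_refl).

Lemma minc_iff (H S : G -> Prop) (v : cosets H) (e : cosets S) x y :
  is_subgroup H -> is_subgroup S ->
  proj1_sig v = rcoset H x -> proj1_sig e = rcoset S y ->
  (minc (Cos H S) v e <-> prodset S H (y ** x^-1)).
Proof.
  intros HH HS Hv He. split.
  - intros [x' [y' [Hv' [He' [s [h [Hs [Hh E]]]]]]]].
    rewrite Hv in Hv'. rewrite He in He'.
    apply rcoset_eq_inv in Hv'; auto. apply rcoset_eq_inv in He'; auto.
    exists (y ** y'^-1 ** s), (h ** x' ** x^-1). split; [|split].
    + apply subM; auto.
    + replace (h ** x' ** x^-1) with (h ** (x ** x'^-1)^-1) by geq. apply subM; auto. apply subV; auto.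
    + replace (y ** y'^-1 ** s ** (h ** x' ** x^-1)) with (y ** y'^-1 ** (s ** h) ** x' ** x^-1) by geq.
      rewrite <- E. geq.
  - intro P. exists x, y. auto.
Qed.

Arguments minc_iff {H S} v e x y.
Lemma actset_rcoset S (x a : G) : is_subgroup S -> actset (rcoset S x) a = rcoset S (x ** a).
Proof.
  intro HS. apply functional_extensionality; intro z. apply propositional_extensionality.
  unfold actset. rewrite !rcoset_mem by auto. replace (z ** a^-1 ** x^-1) with (z ** (x ** a)^-1) by geq.
  tauto.
Qed.

Lemma arc_base (H S : G -> Prop) (v : cosets H) (e : cosets S) : is_subgroup H -> is_subgroup S ->
  minc (Cos H S) v e -> exists a, proj1_sig v = rcoset H a /\ proj1_sig e = rcoset S a.
Proof.
  intros HH HS [x [y [Hv [He [s [h [Hs [Hh E]]]]]]]].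
  exists (h ** x). rewrite Hv, He. split; apply rcoset_eq; auto.
  - replace (x ** (h ** x)^-1) with (h^-1) by geq. apply subV; auto.
  - replace (y ** (h ** x)^-1) with (y ** x^-1 ** h^-1) by geq. rewrite E. gsimpl. exact Hs.
Qed.

Lemma arc_trans (H S : G -> Prop) : is_subgroup H -> is_subgroup S -> cos_arc_transitive H S.
Proof.
  intros HH HS v v' e e' I I'.
  destruct (arc_base _ _ _ _ HH HS I) as [a [Hv He]]. destruct (arc_base _ _ _ _ HH HS I') as [a' [Hv' He']].
  exists (a^-1 ** a'). rewrite Hv, He, Hv', He', !actset_rcoset by auto.
  replace (a ** (a^-1 ** a')) with a' by geq. auto.
Qed.

Lemma sig_nat_eq n (a b : {i : nat | i < n}) : proj1_sig a = proj1_sig b -> a = b.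
Proof. destruct a, b; simpl; intro; subst; f_equal; apply proof_irrelevance. Qed.


Section Ext.
Variables (H E' E : G -> Prop) (I : Type) (f : I -> G).
Hypotheses (HH : is_subgroup H) (HE' : is_subgroup E') (HE : is_subgroup E) (sub : subset E' E)
  (fE : forall i, E (f i)) (fD : forall i j, E' (f i ** (f j)^-1) -> i = j)
  (fC : forall x, E x -> exists i, E' (x ** (f i)^-1))
  (prodEH : forall z, prodset E H z -> prodset E' H z).

Lemma idx_ex (z : G) : exists i, E' (z ** (rep (mkc E z))^-1 ** (f i)^-1).
Proof.
  apply fC. apply rcoset_eq_inv; auto. rewrite <- rep_spec. reflexivity.
Qed.
Definition idx (z : G) : I := proj1_sig (constructive_indefinite_description _ (idx_ex z)).
Lemma idx_spec z : E' (z ** (rep (mkc E z))^-1 ** (f (idx z))^-1).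
Proof. unfold idx. destruct (constructive_indefinite_description _ _) as [i Hi]. exact Hi. Qed.

Definition eF (c : cosets E') : cosets E * I := (mkc E (rep c), idx (rep c)).
Definition eG (p : cosets E * I) : cosets E' := mkc E' (f (snd p) ** rep (fst p)).

Lemma ext_iso : mg_iso (Cos H E') (MGraph (fun (v : cosets H) (e : cosets E * I) => minc (Cos H E) v (fst e))).
Proof.
  exists (fun v => v), eF. split; [|split].
  - exists (fun v => v); auto.
  - exists eG. split.
    + intro c. apply cosets_eq. unfold eG, eF; simpl. rewrite (rep_spec c).
      symmetry. apply rcoset_eq; auto. pose proof (idx_spec (rep c)) as P.
      revert P. gsimpl. intro P. exact P.
    + intros [c i]. unfold eG, eF; simpl.
      set (w := f i ** rep c). set (z := rep (mkc E' w)).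
      assert (Hz : E' (z ** w^-1)).
      { apply rcoset_eq_inv; auto. unfold z. rewrite <- rep_spec. reflexivity. }
      assert (Hc : mkc E z = c).
      { apply cosets_eq. simpl. rewrite (rep_spec c). apply rcoset_eq; auto.
        replace (z ** (rep c)^-1) with ((z ** w^-1) ** f i) by (unfold w; geq).
        apply subM; auto. }
      rewrite Hc. f_equal. pose proof (idx_spec z) as P. rewrite Hc in P.
      apply fD. replace (f (idx z) ** (f i)^-1) with ((z ** (rep c)^-1 ** (f (idx z))^-1)^-1 ** (z ** w^-1))
        by (unfold w; geq).
      apply subM; auto. apply subV; auto.
  - intros v c. simpl. unfold eF; simpl.
    rewrite (minc_iff v c (rep v) (rep c) HH HE' (rep_spec v) (rep_spec c)).
    rewrite (minc_iff v (mkc E (rep c)) (rep v) (rep c) HH HE (rep_spec v) eq_refl).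
    split; auto. intros [s [h [Hs [Hh ->]]]]. exists s, h; auto.
Qed.
End Ext.

Lemma divlt n m k : m <> 0 -> k < n * m -> k / m < n.
Proof. intros Hm Hk. apply Nat.Div0.div_lt_upper_bound; lia. Qed.

Lemma index_pos (A B : G -> Prop) m : is_subgroup A -> index_eq A B m -> m <> 0.
Proof. intros HA [f [_ [_ fC]]]. destruct (fC (@gone G) (sub1 _ HA)) as [[i Hi] _]. lia. Qed.

Lemma index_mul (A B C : G -> Prop) n m : is_subgroup A -> is_subgroup B -> is_subgroup C ->
  subset B A -> subset C B -> index_eq A B n -> index_eq B C m -> index_eq A C (n * m).
Proof.
  intros HA HB HC sBA sCB IAB IBC.
  assert (Hm : m <> 0) by exact (index_pos B C m HB IBC).
  destruct IAB as [f [fA [fD fC]]]. destruct IBC as [h [hB [hD hC]]].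
  exists (fun k : {k | k < n * m} => h (exist (fun a => a < m) (proj1_sig k mod m) (Nat.mod_upper_bound _ _ Hm)) **
                   f (exist (fun a => a < n) (proj1_sig k / m) (divlt n m _ Hm (proj2_sig k)))).
  split; [|split].
  - intro k. apply subM; auto.
  - intros k k' P. simpl in P.
    set (hj := h _) in P. set (hj' := h (exist (fun a => a < m) (proj1_sig k' mod m) _)) in P.
    assert (Ef : exist (fun i => i < n) (proj1_sig k / m) (divlt n m _ Hm (proj2_sig k)) =
                 exist (fun a => a < n) (proj1_sig k' / m) (divlt n m _ Hm (proj2_sig k'))).
    { apply fD. replace (f (exist (fun a => a < n) (proj1_sig k / m) (divlt n m _ Hm (proj2_sig k))) **
        (f (exist (fun a => a < n) (proj1_sig k' / m) (divlt n m _ Hm (proj2_sig k'))))^-1) with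
        (hj^-1 ** (hj ** f (exist (fun a => a < n) (proj1_sig k / m) (divlt n m _ Hm (proj2_sig k))) **
           (hj' ** f (exist (fun a => a < n) (proj1_sig k' / m) (divlt n m _ Hm (proj2_sig k'))))^-1) ** hj') by geq.
      apply subM; auto. apply subM; auto. apply subV; auto. unfold hj; auto. unfold hj'; auto. }
    rewrite Ef in P. revert P. gsimpl. intro P. apply hD in P. unfold hj, hj' in P.
    apply (f_equal (@proj1_sig _ _)) in P. apply (f_equal (@proj1_sig _ _)) in Ef. simpl in P, Ef.
    apply sig_nat_eq. rewrite (Nat.div_mod_eq (proj1_sig k) m), (Nat.div_mod_eq (proj1_sig k') m). lia.
  - intros x Hx. destruct (fC x Hx) as [i Hi]. destruct (hC _ Hi) as [j Hj].
    destruct i as [i ip]. destruct j as [j jp].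
    assert (kp : i * m + j < n * m) by nia.
    exists (exist _ (i * m + j) kp). simpl.
    assert (E1 : exist (fun a => a < m) ((i * m + j) mod m) (Nat.mod_upper_bound _ _ Hm) = exist _ j jp).
    { apply sig_nat_eq. simpl. symmetry. apply (Nat.mod_unique _ _ i); lia. }
    assert (E2 : exist (fun a => a < n) ((i * m + j) / m) (divlt n m _ Hm kp) = exist _ i ip).
    { apply sig_nat_eq. simpl. symmetry. apply (Nat.div_unique _ _ _ j); lia. }
    rewrite E1, E2. revert Hj. gsimpl. auto.
Qed.

Lemma setI_sub (A B : G -> Prop) : is_subgroup A -> is_subgroup B -> is_subgroup (setI A B).
Proof.
  intros HA HB. split; [|split].
  - split; apply sub1; auto.
  - intros x y [] []; split; apply subM; auto.
  - intros x []; split; apply subV; auto.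
Qed.

Lemma gen_sub (A : G -> Prop) : is_subgroup (gen A).
Proof.
  split; [|split].
  - intros S HS _. apply sub1; auto.
  - intros x y Hx Hy S HS HA. apply subM; [auto | apply Hx | apply Hy]; auto.
  - intros x Hx S HS HA. apply subV; [auto | apply Hx]; auto.
Qed.

Lemma conj_sub (H : G -> Prop) g : is_subgroup H -> is_subgroup (conjset H g).
Proof.
  intro HH. unfold conjset. split; [|split].
  - gsimpl. apply sub1; auto.
  - intros x y Hx Hy. replace (g ** (x ** y) ** g^-1) with ((g ** x ** g^-1) ** (g ** y ** g^-1)) by geq.
    apply subM; auto.
  - intros x Hx. replace (g ** x^-1 ** g^-1) with ((g ** x ** g^-1)^-1) by geq. apply subV; auto.
Qed.

Section Key.
Variables (H J : G -> Prop).
Hypotheses (HH : is_subgroup H) (HJ : is_subgroup J) (I2 : index_eq J (setI H J) 2).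

Lemma key u v : J u -> J v -> ~ H u -> ~ H v -> H (u ** v^-1).
Proof.
  intros Ju Jv nu nv. destruct I2 as [f [fJ [fD fC]]].
  destruct (fC (@gone G) (sub1 _ HJ)) as [i1 [P1 _]].
  destruct (fC u Ju) as [iu [Pu _]]. destruct (fC v Jv) as [iv [Pv _]].
  assert (Hf : H (f i1)). { revert P1. gsimpl. intro P1. apply subVr; auto. }
  assert (Nu : iu <> i1).
  { intro E; subst. apply nu. replace u with ((u ** (f i1)^-1) ** f i1) by geq. apply subM; auto. }
  assert (Nv : iv <> i1).
  { intro E; subst. apply nv. replace v with ((v ** (f i1)^-1) ** f i1) by geq. apply subM; auto. }
  assert (E : iu = iv).
  { destruct iu as [a pa], iv as [c pc], i1 as [d pd]. apply sig_nat_eq. simpl.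
    assert (a <> d) by (intro; apply Nu; apply sig_nat_eq; simpl; auto).
    assert (c <> d) by (intro; apply Nv; apply sig_nat_eq; simpl; auto). lia. }
  subst. replace (u ** v^-1) with ((u ** (f iv)^-1) ** (v ** (f iv)^-1)^-1) by geq.
  apply subM; auto. apply subV; auto.
Qed.

Lemma notH_inv x : ~ H x -> ~ H (x^-1).
Proof. intros n h. apply n. apply subVr; auto. Qed.

Lemma key2 u v : J u -> J v -> ~ H u -> ~ H v -> H (u^-1 ** v).
Proof.
  intros. rewrite <- (g_invK v). apply key; [apply subV; auto | apply subV; auto | apply notH_inv; auto | apply notH_inv; auto].
Qed.

Lemma key3 u v : J u -> J v -> ~ H u -> ~ H v -> H (u ** v).
Proof.
  intros. rewrite <- (g_invK v). apply key; [auto | apply subV; auto | auto | apply notH_inv; auto].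
Qed.

Lemma npow_par x : J x -> ~ H x -> forall k,
  J (npow x (2 * k)) /\ H (npow x (2 * k)) /\ J (npow x (2 * k + 1)) /\ ~ H (npow x (2 * k + 1)).
Proof.
  intros Jx nx. induction k as [|k [J0 [H0 [J1 N1]]]].
  - simpl. gsimpl. split; [apply sub1; auto|split; [apply sub1; auto| auto]].
  - replace (2 * S k) with (S (2 * k + 1)) by lia. replace (S (2 * k + 1) + 1) with (S (S (2 * k + 1))) by lia.
    simpl (npow x (S _)).
    assert (Hp : H (x ** npow x (2 * k + 1))) by (apply key3; auto).
    repeat split.
    + apply subM; auto.
    + exact Hp.
    + apply subM; auto. apply subM; auto.
    + intro Hq. apply nx. replace x with ((x ** (x ** npow x (2 * k + 1))) ** (x ** npow x (2 * k + 1))^-1) by geq.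
      apply subM; auto. apply subV; auto.
Qed.

Lemma zpow_odd g b : J g -> ~ H g -> Z.odd b = true -> J (zpow g b) /\ ~ H (zpow g b).
Proof.
  intros Jg ng Hb. assert (Hk : exists k, Z.abs_nat b = 2 * k + 1).
  { apply Z.odd_spec in Hb. destruct Hb as [m Hm]. pose proof (Nat2Z.inj_abs_nat b) as Ha.
    destruct (Z_le_gt_dec 0 m).
    - exists (Z.to_nat m). lia.
    - exists (Z.to_nat (- m - 1)). lia. }
  destruct Hk as [k Hk]. unfold zpow. rewrite Hk.
  destruct (0 <=? b)%Z.
  - destruct (npow_par g Jg ng k) as [_ [_ [A B]]]. auto.
  - destruct (npow_par (g^-1) (subV _ HJ _ Jg) (notH_inv _ ng) k) as [_ [_ [A B]]]. auto.
Qed.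
End Key.

Lemma main_lemma (H J J' : G -> Prop) (g : G) (b : Z) (mu : nat) :
  is_subgroup H -> is_subgroup J -> is_subgroup J' ->
  (exists x, ~ H x) ->
  index_eq J (setI H J) 2 ->
  (exists n, index_eq H (setI H J) n) ->
  J g -> ~ H g ->
  Z.odd b = true ->
  subset (gen (fun x => x = zpow g b)) J' -> subset J' J ->
  index_eq J J' mu ->
  let K := setI H (conjset H g) in
  let L := gen (fun x => K x \/ x = g) in
  index_eq J' (setI H J') 2 /\
  (exists n, index_eq H (setI H J') n) /\
  cos_arc_transitive H J' /\
  cos_extender H J' J mu /\
  (forall lam, index_eq K (setI H J) lam -> cos_extender H J' L (lam * mu)).
Proof.
  intros HH HJ HJ' _ I2 [n0 In0] Jg nHg Hb Hgen sJ'J Imu K L.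
  destruct (zpow_odd H J HH HJ I2 g b Jg nHg Hb) as [Jgb nHgb].
  set (gb := zpow g b) in *.
  assert (J'gb : J' gb) by (apply Hgen; intros S HS Hs; apply Hs; reflexivity).
  assert (PJ : forall z, prodset J H z -> prodset J' H z).
  { intros z [j [h [Jj [Hh ->]]]]. destruct (classic (H j)) as [Hj|nHj].
    - exists (@gone G), (j ** h). split; [apply sub1; auto|split; [apply subM; auto|geq]].
    - exists gb, (gb^-1 ** j ** h). split; [auto|split].
      + apply subM; auto. apply key2 with J; auto.
      + geq. }
  assert (p0 : 0 < 2) by lia. assert (p1 : 1 < 2) by lia.
  split; [|split; [|split; [|split]]].
  -
    exists (fun i : {i | i < 2} => if Nat.eqb (proj1_sig i) 0 then @gone G else gb).
    split; [|split].
    + intros [i ip]; simpl. destruct (Nat.eqb i 0); [apply sub1|]; auto.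
    + intros [i ip] [j jp]; simpl. intros [Hij _]. apply sig_nat_eq; simpl.
      destruct (Nat.eqb_spec i 0); destruct (Nat.eqb_spec j 0); try lia.
      * exfalso. apply nHgb. revert Hij. gsimpl. intro Hij. apply subVr; auto.
      * exfalso. apply nHgb. revert Hij. gsimpl. auto.
    + intros x Jx. destruct (classic (H x)) as [Hx|nHx].
      * exists (exist _ 0 p0). simpl. gsimpl. split; auto.
      * exists (exist _ 1 p1). simpl. split.
        -- apply key with J; auto.
        -- apply subM; auto. apply subV; auto.
  -
    exists (n0 * mu). apply index_mul with (setI H J); auto using setI_sub.
    + intros x [a c]; auto.
    + intros x [a c]; split; auto.
    + destruct Imu as [fJ [fJJ [fJD fJC]]].
      assert (Ex : forall j, exists h, H h /\ J h /\ J' (h ** (fJ j)^-1)).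
      { intro j. destruct (classic (H (fJ j))) as [Hf|nHf].
        - exists (fJ j). gsimpl. split; [auto|split; [auto|apply sub1; auto]].
        - exists (gb^-1 ** fJ j). split; [|split].
          + apply key2 with J; auto.
          + apply subM; auto. apply subV; auto.
          + gsimpl. apply subV; auto. }
      exists (fun j => proj1_sig (constructive_indefinite_description _ (Ex j))).
      split; [|split].
      * intro j. pose proof (proj2_sig (constructive_indefinite_description _ (Ex j))) as [Hh [Jh _]]. split; auto.
      * intros j j'. destruct (constructive_indefinite_description _ (Ex j)) as [h [Hh [Jh P]]].
        destruct (constructive_indefinite_description _ (Ex j')) as [h' [Hh' [Jh' P']]]. simpl.
        intros [_ Q]. apply fJD. replace (fJ j ** (fJ j')^-1) with ((h ** (fJ j)^-1)^-1 ** (h ** h'^-1) ** (h' ** (fJ j')^-1)) by geq.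
        apply subM; auto. apply subM; auto. apply subV; auto.
      * intros x [Hx Jx]. destruct (fJC x Jx) as [j Pj]. exists j.
        destruct (constructive_indefinite_description _ (Ex j)) as [h [Hh [Jh P]]]. simpl. split.
        -- apply subM; auto. apply subV; auto.
        -- replace (x ** h^-1) with ((x ** (fJ j)^-1) ** (h ** (fJ j)^-1)^-1) by geq. apply subM; auto. apply subV; auto.
  - apply arc_trans; auto.
  - split; [|split; apply arc_trans; auto].
    destruct Imu as [fJ [fJJ [fJD fJC]]].
    exact (ext_iso H J' J {i | i < mu} fJ HH HJ' HJ sJ'J fJJ fJD fJC PJ).
  -
    intros lam IK.
    assert (HK : is_subgroup K) by (apply setI_sub; auto; apply conj_sub; auto).
    assert (HL : is_subgroup L) by apply gen_sub.
    assert (KH : forall x, K x -> H x) by (intros x [a _]; auto).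
    assert (HJK : forall x, H x -> J x -> K x).
    { intros x Hx Jx. split; auto. unfold conjset.
      assert (Jgx : J (g ** x)) by (apply subM; auto).
      assert (nHgx : ~ H (g ** x)).
      { intro Q. apply nHg. replace g with ((g ** x) ** x^-1) by geq. apply subM; auto. apply subV; auto. }
      apply key with J; auto. }
    assert (g2 : K (g ** g)) by (apply HJK; [apply key3 with J; auto | apply subM; auto]).
    assert (C1 : forall x, K x -> K (g^-1 ** x ** g)).
    { intros x [Hx Cx]. unfold conjset in Cx. split.
      - replace (g^-1 ** x ** g) with ((g ** g)^-1 ** (g ** x ** g^-1) ** (g ** g)) by geq.
        apply subM; auto. apply subM; auto. apply subV; auto.
      - unfold conjset. replace (g ** (g^-1 ** x ** g) ** g^-1) with x by geq. auto. }
    set (S := fun x => K x \/ K (g^-1 ** x)).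
    assert (HS : is_subgroup S).
    { split; [|split].
      - left. apply sub1; auto.
      - intros x y [Kx|Kx] [Ky|Ky].
        + left. apply subM; auto.
        + right. replace (g^-1 ** (x ** y)) with ((g^-1 ** x ** g) ** (g^-1 ** y)) by geq. apply subM; auto.
        + right. replace (g^-1 ** (x ** y)) with ((g^-1 ** x) ** y) by geq. apply subM; auto.
        + left. replace (x ** y) with ((g ** g) ** (g^-1 ** (g^-1 ** x) ** g) ** (g^-1 ** y)) by geq.
          apply subM; auto. apply subM; auto.
      - intros x [Kx|Kx].
        + left. apply subV; auto.
        + right. replace (g^-1 ** x^-1) with ((g^-1 ** (g^-1 ** x)^-1 ** g) ** (g ** g)^-1) by geq.
          apply (subM _ HK); [apply C1; apply (subV _ HK); auto | apply (subV _ HK); auto]. }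
    assert (LS : forall x, L x -> S x).
    { intros x Lx. apply Lx; auto. intros y [Ky| ->].
      - left; auto.
      - right. gsimpl. apply sub1; auto. }
    assert (KL : forall x, K x -> L x) by (intros x Kx S' HS' Hs'; apply Hs'; auto).
    assert (Lg : L g) by (intros S' HS' Hs'; apply Hs'; auto).
    assert (JL : forall x, J x -> L x).
    { intros x Jx. destruct (classic (H x)) as [Hx|nHx].
      - apply KL, HJK; auto.
      - replace x with ((x ** g^-1) ** g) by geq. apply subM; auto. apply KL, HJK.
        + apply key with J; auto.
        + apply subM; auto. apply subV; auto. }
    assert (ILJ : index_eq L J lam).
    { destruct IK as [fK [fKK [fKD fKC]]]. exists fK. split; [|split].
      - intro i; apply KL; auto.
      - intros i j Q. apply fKD. split; auto. apply KH. apply subM; auto. apply subV; auto.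
      - intros x Lx. destruct (LS x Lx) as [Kx|Kx].
        + destruct (fKC x Kx) as [i [_ Q]]. exists i; auto.
        + destruct (fKC _ Kx) as [i [_ Q]]. exists i.
          replace (x ** (fK i)^-1) with (g ** (g^-1 ** x ** (fK i)^-1)) by geq. apply subM; auto. }
    assert (ILJ' : index_eq L J' (lam * mu)).
    { apply index_mul with J; auto. }
    assert (PL : forall z, prodset L H z -> prodset J' H z).
    { intros z [l [h [Ll [Hh ->]]]]. destruct (LS l Ll) as [Kl|Kl].
      - exists (@gone G), (l ** h). split; [apply sub1; auto|split; [apply subM; auto|geq]].
      - exists gb, (gb^-1 ** g ** (g^-1 ** l) ** h). split; [auto|split].
        + apply subM; auto. apply subM; auto. apply key2 with J; auto.
        + geq. }
    split; [|split; apply arc_trans; auto].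
    destruct ILJ' as [f [fL [fD fC]]].
    exact (ext_iso H J' L {i | i < lam * mu} f HH HJ' HL (fun x Hx => JL x (sJ'J x Hx)) fL fD fC PL).
Qed.
End Main.

Theorem lemma2p9 (G : group) (H J J' : G -> Prop) (g : G) (b : Z) (mu : nat) :
  is_subgroup H -> is_subgroup J -> is_subgroup J' ->
  (exists x, ~ H x) ->
  index_eq J (setI H J) 2 ->
  (exists n, index_eq H (setI H J) n) ->
  J g -> ~ H g ->
  Z.odd b = true ->
  subset (gen (fun x => x = zpow g b)) J' -> subset J' J ->
  index_eq J J' mu ->
  let K := setI H (conjset H g) in
  let L := gen (fun x => K x \/ x = g) in
  index_eq J' (setI H J') 2 /\
  (exists n, index_eq H (setI H J') n) /\
  cos_arc_transitive H J' /\
  cos_extender H J' J mu /\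
  (forall lam, index_eq K (setI H J) lam -> cos_extender H J' L (lam * mu)).
Proof.
  exact (@main_lemma G H J J' g b mu).
Qed.
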